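(* Let $C^{(n)}$ be a CNOT circuit on $n$ qubits which generates, from a starting label sequence $\ell=(\ell_1,\ldots,\ell_n)$, a set $L^{(n)}$ of labels not containing any of the labels $\ell_1,\ldots,\ell_n$ of the starting sequence. Then $\operatorname{size}(C^{(n)})\geq |L^{(n)}|$ and $D(C^{(n)})\geq |L^{(n)}|/(n/2)$.
   Context: $\mathrm{CX}_{i,j}$ ($i\neq j$) is the CNOT gate with control $i$ and target $j$ on qubits $1,\ldots,n$. A CNOT circuit is a finite sequence of moments $1,\ldots,d$, each a set of CNOT gates acting on pairwise disjoint qubits; $D(C)=d$ is its depth and $\operatorname{size}(C)$ its total number of gates. A label is a subset of $\{1,\ldots,n\}$; $ab$ denotes the symmetric difference of labels $a,b$. A label sequence is acted on from the right: $\ell\,\mathrm{CX}_{i,j}$ replaces $\ell_j$ by $\ell_i\ell_j$; a moment applies its gates, a circuit its moments in order. With $C_{1,m}$ the first $m$ moments, $C$ generates $L$ from $\ell$ if every element of $L$ occurs as an entry of $\ell C_{1,m}$ for some $m\in\{1,\ldots,D(C)\}$. *)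

(* Defs.v *)
From mathcomp Require Import all_boot all_order all_algebra.
Set Implicit Arguments. Unset Strict Implicit. Unset Printing Implicit Defensive.

(* Qubits are 'I_n (qubit k+1 of the paper is ordinal k). *)
Definition label (n : nat) := {set 'I_n}.
Definition labseq (n : nat) := {ffun 'I_n -> label n}.

(* A CNOT gate CX_{i,j}: (control i, target j), i <> j. *)
Definition gate (n : nat) := ('I_n * 'I_n)%type.
Definition gate_ok n (g : gate n) : bool := g.1 != g.2.
Definition gate_qubits n (g : gate n) : {set 'I_n} := [set g.1; g.2].

Definition moment (n : nat) := seq (gate n).
Definition moment_ok n (m : moment n) : bool :=
  all (@gate_ok n) m && uniq m &&
  pairwise (fun g h => [disjoint gate_qubits g & gate_qubits h]) m.

Definition circuit (n : nat) := seq (moment n).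
Definition circuit_ok n (C : circuit n) : bool := all (@moment_ok n) C.

Definition depth n (C : circuit n) : nat := size C.
Definition csize n (C : circuit n) : nat := sumn (map size C).

Definition symdiff n (a b : label n) : label n := (a :\: b) :|: (b :\: a).
Definition apply_gate n (l : labseq n) (g : gate n) : labseq n :=
  [ffun k => if k == g.2 then symdiff (l g.1) (l g.2) else l k].
(* Gates of a moment act on disjoint qubits, so they commute; apply them in turn. *)
Definition apply_moment n (l : labseq n) (m : moment n) : labseq n :=
  foldl (@apply_gate n) l m.
Definition apply_circuit n (l : labseq n) (C : circuit n) : labseq n :=
  foldl (@apply_moment n) l C.

Definition generates n (C : circuit n) (l : labseq n) (L : {set label n}) : Prop :=
  forall a, a \in L -> exists m k, [/\ 1 <= m, m <= depth C & apply_circuit l (take m C) k = a].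

(* Main.v *)
Require Import Defs.
From mathcomp Require Import all_boot all_order all_algebra.
From mathcomp Require Import zify ring lra.
Import GRing.Theory Num.Theory.

Definition entries {n} (l : labseq n) : {set label n} := [set l k | k in 'I_n].

Lemma entries_gate {n} (l : labseq n) (g : gate n) :
  entries (apply_gate l g) \subset entries l :|: [set symdiff (l g.1) (l g.2)].
Proof.
apply/subsetP => a /imsetP [k _ ->]; rewrite ffunE.
case: eqP => _; first by rewrite in_setU set11 orbT.
by rewrite in_setU imset_f.
Qed.

Lemma gates_bound {n} (gs : seq (gate n)) (l : labseq n) :
  exists W : {set label n}, (#|W| <= size gs)%N /\
    forall i, entries (foldl (@apply_gate n) l (take i gs)) \subset entries l :|: W.
Proof.
elim: gs l => [|g gs IH] l.
  by exists set0; split; rewrite ?cards0 // => i; rewrite setU0 /=.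
have [W [HW HI]] := IH (apply_gate l g).
exists (symdiff (l g.1) (l g.2) |: W); split.
  by rewrite cardsU1; case: (_ \notin _); rewrite /= ?add1n ?add0n ?ltnS // leqW.
case=> [|i]; first by rewrite take0 /= subsetUl.
rewrite /= (subset_trans (HI i)) //.
apply/subsetP => a; rewrite !in_setU => /orP [|->]; last by rewrite !orbT.
move/(subsetP (entries_gate l g)); rewrite in_setU => /orP [->//|].
by rewrite in_set1 => /eqP ->; rewrite eqxx orbT.
Qed.

Lemma circuit_flatten {n} (l : labseq n) (C : circuit n) :
  apply_circuit l C = foldl (@apply_gate n) l (flatten C).
Proof.
by elim: C l => [|m C IH] l //=; rewrite IH foldl_cat.
Qed.

Definition Uq {n} (m : moment n) : {set 'I_n} :=
  foldr (fun g A => gate_qubits g :|: A) set0 m.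

Lemma memUq {n} (m : moment n) x : x \in Uq m -> exists2 h, h \in m & x \in gate_qubits h.
Proof.
elim: m => [|g m IH] /=; first by rewrite in_set0.
rewrite in_setU => /orP [xg|/IH [h hm xh]]; first by exists g; rewrite ?mem_head.
by exists h; rewrite // in_cons hm orbT.
Qed.

Lemma moment_bound {n} (m : moment n) : moment_ok m -> (2 * size m <= n)%N.
Proof.
move=> /andP [/andP [Hg _] Hp].
suff: #|Uq m| = (2 * size m)%N.
  by move <-; rewrite -[X in (_ <= X)%N]card_ord max_card.
elim: m Hg Hp => [|g m IH] /=; first by rewrite cards0.
move=> /andP [Hg1 Hg] /andP [Hd Hp].
rewrite cardsU IH //.
have -> : #|gate_qubits g| = 2%N by rewrite cards2; move: Hg1; rewrite /gate_ok => ->.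
have -> : gate_qubits g :&: Uq m = set0.
  apply/setP => x; rewrite in_setI in_set0.
  apply/andP => -[xg /memUq [h hm xh]].
  by move: (disjointFr (allP Hd h hm) xg); rewrite xh.
by rewrite cards0 subn0 mulnS.
Qed.

Lemma circuit_bound {n} (C : circuit n) : circuit_ok C -> (2 * csize C <= n * depth C)%N.
Proof.
elim: C => [|m C IH] //= /andP [Hm HC].
rewrite /csize /= mulnDr mulnS; apply: leq_add; first exact: moment_bound.
exact: IH.
Qed.

Theorem mainTheorem3 (n : nat) (C : circuit n) (l : labseq n) (L : {set label n}) :
  circuit_ok C ->
  generates C l L ->
  (forall k : 'I_n, l k \notin L) ->
  (#|L| <= csize C)%N /\
  ((#|L|%:R : rat) / (n%:R / 2%:R) <= (depth C)%:R)%R.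
Proof.
move=> Hok Hgen Hnot.
have [W [HW HI]] := gates_bound (flatten C) l.
have HL : (#|L| <= csize C)%N.
  rewrite /csize -size_flatten; apply: leq_trans HW; apply: subset_leq_card.
  apply/subsetP => a aL; have [m [k [_ _ Ha]]] := Hgen a aL.
  have : a \in entries l :|: W.
    apply: (subsetP (HI (size (flatten (take m C))))).
    have -> : flatten C = flatten (take m C) ++ flatten (drop m C) by rewrite -flatten_cat cat_take_drop.
    rewrite take_size_cat // -circuit_flatten.
    by rewrite -Ha; apply: imset_f.
  rewrite in_setU => /orP [/imsetP [k' _ Hk']|//].
  by move: (Hnot k'); rewrite -Hk' aL.
split=> //.
have H2 := circuit_bound _ Hok.
have H3 : (2 * #|L| <= n * depth C)%N by apply: leq_trans H2; rewrite leq_mul2l HL.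
case: (posnP n) => [n0|npos].
  have -> : (n%:R : rat) = 0%R by rewrite n0.
  by rewrite mul0r invr0 mulr0 ler0n.
rewrite ler_pdivrMr; last by rewrite divr_gt0 ?ltr0n.
have : ((2 * #|L|)%:R <= (n * depth C)%:R :> rat)%R by rewrite ler_nat.
rewrite !natrM. lra.
Qed.
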